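(* Let $\mathcal{R}$ be a commutative ring with unity and let $P$ be a locally finite poset with at least three elements in which every maximal chain is infinite. Then for every additive biderivation $b$ of $I(P,\mathcal{R})$ there exist scalars $\lambda^i_j\in\mathcal{R}$ ($i\in\mathcal{I}$, $j\in\mathcal{J}_i$) such that for all $\alpha,\beta\in I(P,\mathcal{R})$, $$b(\alpha,\beta)=\sum_{i\in\mathcal{I}}\sum_{j\in\mathcal{J}_i}\lambda^i_j[\alpha^i_j,\beta^i_j],$$ where $\alpha^i_j=\sum_{x\le y,\ x,y\in P^i_j}\alpha_{xy}e_{xy}$ and similarly for $\beta$; i.e. $b$ is a sum of (restricted) inner biderivations.
   Context: $I(P,\mathcal{R})$ is the incidence algebra: functions $f:P\times P\to\mathcal{R}$ with $f(x,y)=0$ unless $x\le y$, with product $(fg)(x,y)=\sum_{x\le z\le y}f(x,z)g(z,y)$; $f_{xy}=f(x,y)$, $e_{xy}$ ($x\le y$) is the function equal to $1$ at $(x,y)$ and $0$ elsewhere, and sums are entrywise. $[\alpha,\beta]=\alpha\beta-\beta\alpha$. An additive biderivation is a map $b$ of two arguments, additive in each, with $b(\alpha\beta,\gamma)=\alpha b(\beta,\gamma)+b(\alpha,\gamma)\beta$ and $b(\alpha,\beta\gamma)=\beta b(\alpha,\gamma)+b(\alpha,\beta)\gamma$. The connected components $P^i$ ($i\in\mathcal{I}$) are the classes of the equivalence relation ''joined by a finite sequence of successively comparable elements''. A maximal chain is a totally ordered subset to which no element can be added keeping it totally ordered. For $Q=P^i$, let $L$ be its set of maximal chains; write $l'\approx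 l''$ if there exist $x<y$ with $x,y\in l'\cap l''$; call $l',l''$ connected if $l'\approx l_0\approx\cdots\approx l_n\approx l''$ for some maximal chains $l_0,\dots,l_n$; let $\{L_j\}_{j\in\mathcal{J}_i}$ be the equivalence classes and $P^i_j=\{x\in P^i: x\in l\text{ for some }l\in L_j\}$. *)

(* Defs.v *)
From HB Require Import structures.
From mathcomp Require Import all_boot all_order all_algebra.
From Stdlib Require Import ClassicalEpsilon.
From Stdlib Require Relations List.
Set Implicit Arguments. Unset Strict Implicit. Unset Printing Implicit Defensive.
Import Order.TTheory GRing.Theory.
Local Open Scope order_scope.

Section Incidence.
Context {d : Order.disp_t} {P : porderType d}.

Definition locally_finite : Prop :=
  forall x y : P, exists s : seq P, forall z, (x <= z <= y) <-> z \in s.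

(* an enumeration (without duplicates) of the interval [x,y], chosen
   classically; it is correct whenever the interval is finite *)
Definition itv (x y : P) : seq P :=
  epsilon (inhabits [::])
    (fun s : seq P => uniq s /\ forall z, (x <= z <= y) <-> z \in s).

Definition finite_set (A : P -> Prop) : Prop :=
  exists s : seq P, forall z, A z -> z \in s.

Definition is_chain (l : P -> Prop) : Prop :=
  forall a b, l a -> l b -> (a <= b) || (b <= a).

Definition maximal_chain_in (Q l : P -> Prop) : Prop :=
  (forall a, l a -> Q a) /\ is_chain l /\
  forall l' : P -> Prop, (forall a, l a -> l' a) -> (forall a, l' a -> Q a) ->
     is_chain l' -> forall a, l' a -> l a.

Definition maximal_chain (l : P -> Prop) : Prop :=
  maximal_chain_in (fun _ => True) l.

Definition comparable_rel (x y : P) : Prop := (x <= y) || (y <= x).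

Definition connectedP (x y : P) : Prop :=
  Relation_Operators.clos_refl_trans P comparable_rel x y.

Definition is_component (Q : P -> Prop) : Prop :=
  exists x, Q = connectedP x.

Definition chain_approx (l1 l2 : P -> Prop) : Prop :=
  exists x y, (x < y) /\ l1 x /\ l1 y /\ l2 x /\ l2 y.

Definition chain_connected (Q : P -> Prop) (l1 l2 : P -> Prop) : Prop :=
  Relation_Operators.clos_refl_trans (P -> Prop)
    (fun a b => maximal_chain_in Q a /\ maximal_chain_in Q b /\ chain_approx a b)
    l1 l2.

(* C is an equivalence class L_j of maximal chains of the component Q *)
Definition is_chain_class (Q : P -> Prop) (C : (P -> Prop) -> Prop) : Prop :=
  exists l, maximal_chain_in Q l /\
    C = (fun l' => maximal_chain_in Q l' /\ chain_connected Q l l').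

Definition class_support (C : (P -> Prop) -> Prop) (x : P) : Prop :=
  exists l, C l /\ l x.

End Incidence.

Section Algebra.
Context {d : Order.disp_t} {P : porderType d} {R : comPzRingType}.
Local Open Scope ring_scope.

(* elements of I(P,R) are the functions f : P -> P -> R vanishing off <= *)
Definition incidence (f : P -> P -> R) : Prop :=
  forall x y, ~~ (x <= y)%O -> f x y = 0.

Definition iadd (f g : P -> P -> R) : P -> P -> R := fun x y => f x y + g x y.
Definition isub (f g : P -> P -> R) : P -> P -> R := fun x y => f x y - g x y.
Definition imul (f g : P -> P -> R) : P -> P -> R :=
  fun x y => \sum_(z <- itv x y) f x z * g z y.
Definition icomm (f g : P -> P -> R) : P -> P -> R := isub (imul f g) (imul g f).

Definition irestr (A : P -> Prop) (f : P -> P -> R) : P -> P -> R :=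
  fun x y => if excluded_middle_informative (A x /\ A y) then f x y else 0.

Definition is_biderivation (b : (P -> P -> R) -> (P -> P -> R) -> (P -> P -> R)) : Prop :=
  forall a1 a2 a3, incidence a1 -> incidence a2 -> incidence a3 ->
    [/\ incidence (b a1 a2),
        b (iadd a1 a2) a3 = iadd (b a1 a3) (b a2 a3),
        b a1 (iadd a2 a3) = iadd (b a1 a2) (b a1 a3),
        b (imul a1 a2) a3 = iadd (imul a1 (b a2 a3)) (imul (b a1 a3) a2)
      & b a1 (imul a2 a3) = iadd (imul a2 (b a1 a3)) (imul (b a1 a2) a3)].

End Algebra.

(* Main.v *)
Require Import Defs.
From HB Require Import structures.
From mathcomp Require Import all_boot all_order all_algebra.
From Stdlib Require Import ClassicalEpsilon FunctionalExtensionality PropExtensionality.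
From Stdlib Require List Relations.
From mathcomp Require Import ring.
Set Implicit Arguments. Unset Strict Implicit. Unset Printing Implicit Defensive.
Import Order.TTheory GRing.Theory.

Section Part1.

Section Alg.
Context {d : Order.disp_t} {P : porderType d} {R : comPzRingType}.
Context (Hlf : @locally_finite d P).
Local Open Scope ring_scope.

Lemma itv_spec (x y : P) : uniq (itv x y) /\ forall z, ((x <= z <= y)%O <-> z \in itv x y).
Proof.
rewrite /itv; apply: (@epsilon_spec _ (inhabits [::]) (fun s : seq P => uniq s /\ forall z, ((x <= z <= y)%O <-> z \in s))).
have [s Hs] := Hlf x y; exists (undup s); split; first exact: undup_uniq.
by move=> z; rewrite mem_undup; exact: Hs.
Qed.

Lemma itv_uniq (x y : P) : uniq (itv x y).
Proof. by case: (itv_spec x y). Qed.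

Lemma mem_itv (x y z : P) : (z \in itv x y) = (x <= z <= y)%O.
Proof. by case: (itv_spec x y) => _ H; apply/idP/idP => /H. Qed.

Lemma sum_itv1 (F : P -> R) (x y c : P) :
  (forall z, z \in itv x y -> z != c -> F z = 0) ->
  \sum_(z <- itv x y) F z = if (x <= c <= y)%O then F c else 0.
Proof.
move=> H; case: (boolP (x <= c <= y)%O) => Hc.
  rewrite (bigD1_seq c) ?mem_itv ?itv_uniq //= big1_seq ?addr0 //.
  by move=> z /andP[nz zin]; apply: H.
rewrite big1_seq // => z [] zin; apply: H => //; apply/eqP => zc.
by move: zin; rewrite zc mem_itv (negbTE Hc).
Qed.

Definition E (u v : P) : P -> P -> R :=
  fun x y => if (x == u) && (y == v) then 1 else 0.

Lemma incidenceE (u v : P) : (u <= v)%O -> incidence (E u v).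
Proof.
move=> uv x y nxy; rewrite /E; case: eqP => // xu; case: eqP => // yv.
by move: nxy; rewrite xu yv uv.
Qed.

Lemma imulEl (u v : P) (g : P -> P -> R) x y : (u <= v)%O -> incidence g ->
  imul (E u v) g x y = if x == u then g v y else 0.
Proof.
move=> uv Hg; rewrite /imul (sum_itv1 (c := v)); last first.
  by move=> z _ zv; rewrite /E (negbTE zv) andbF mul0r.
rewrite /E eqxx andbT; case: eqP => [->|_]; last by case: ifP => _; rewrite ?mul0r.
rewrite uv /= mul1r; case: (boolP (v <= y)%O) => // nvy; by rewrite Hg.
Qed.

Lemma imulEr (u v : P) (f : P -> P -> R) x y : (u <= v)%O -> incidence f ->
  imul f (E u v) x y = if y == v then f x u else 0.
Proof.
move=> uv Hf; rewrite /imul (sum_itv1 (c := u)); last first.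
  by move=> z _ zu; rewrite /E (negbTE zu) /= mulr0.
rewrite /E eqxx /=; case: eqP => [->|_]; last by case: ifP => _; rewrite ?mulr0.
rewrite uv andbT mulr1; case: (boolP (x <= u)%O) => // nxu; by rewrite Hf.
Qed.

Lemma incidence_imul (f g : P -> P -> R) : incidence (imul f g).
Proof.
move=> x y nxy; rewrite /imul big1_seq // => z /andP[_]; rewrite mem_itv => /andP[xz zy].
by move: nxy; rewrite (le_trans xz zy).
Qed.

Lemma incidence_iadd (f g : P -> P -> R) : incidence f -> incidence g -> incidence (iadd f g).
Proof. by move=> Hf Hg x y nxy; rewrite /iadd Hf // Hg // addr0. Qed.

Lemma iaddE (f g : P -> P -> R) x y : iadd f g x y = f x y + g x y.
Proof. by []. Qed.

Lemma imul_addl (f g h : P -> P -> R) x y :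
  imul (iadd f g) h x y = imul f h x y + imul g h x y.
Proof. by rewrite /imul -big_split; apply: eq_bigr => z _; rewrite mulrDl. Qed.

Lemma imul_addr (f g h : P -> P -> R) x y :
  imul f (iadd g h) x y = imul f g x y + imul f h x y.
Proof. by rewrite /imul -big_split; apply: eq_bigr => z _; rewrite mulrDr. Qed.

Lemma imul_subl (f g h : P -> P -> R) x y :
  imul (isub f g) h x y = imul f h x y - imul g h x y.
Proof. by rewrite /imul -sumrB; apply: eq_bigr => z _; rewrite mulrBl. Qed.

Lemma imul_subr (f g h : P -> P -> R) x y :
  imul f (isub g h) x y = imul f g x y - imul f h x y.
Proof. by rewrite /imul -sumrB; apply: eq_bigr => z _; rewrite mulrBr. Qed.

Lemma itv_perm_r (x y z : P) : z \in itv x y ->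
  perm_eq (itv x z) [seq w <- itv x y | (w <= z)%O].
Proof.
rewrite mem_itv => /andP[xz zy]; apply: uniq_perm; rewrite ?filter_uniq ?itv_uniq //.
move=> w; rewrite mem_filter !mem_itv.
case: (boolP (w <= z)%O) => wz; rewrite ?andbF ?andbT ?andbF //=.
  by rewrite (le_trans wz zy) andbT.
Qed.

Lemma itv_perm_l (x y w : P) : w \in itv x y ->
  perm_eq (itv w y) [seq z <- itv x y | (w <= z)%O].
Proof.
rewrite mem_itv => /andP[xw wy]; apply: uniq_perm; rewrite ?filter_uniq ?itv_uniq //.
move=> z; rewrite mem_filter !mem_itv.
case: (boolP (w <= z)%O) => wz /=; last by [].
by rewrite (le_trans xw wz).
Qed.

Lemma imulA (f g h : P -> P -> R) x y :
  imul (imul f g) h x y = imul f (imul g h) x y.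
Proof.
rewrite /imul.
transitivity (\sum_(z <- itv x y) \sum_(w <- itv x y)
   (if (w <= z)%O then f x w * g w z * h z y else 0)).
  apply: eq_big_seq => z zin; rewrite (perm_big _ (itv_perm_r zin)) big_filter.
  by rewrite mulr_suml -big_mkcond.
rewrite exchange_big; apply: eq_big_seq => w win.
rewrite (perm_big _ (itv_perm_l win)) big_filter mulr_sumr [RHS]big_mkcond.
by apply: eq_bigr => z _; case: ifP => //; rewrite mulrA.
Qed.

Lemma zmod_aux (a b c e X Y : R) :
  a + X + (Y + e) = b + Y + (X + c) -> a - b = c - e.
Proof. move=> h. have h' : a - b = (a + X + (Y + e)) - (b + Y + X + e) by ring.
rewrite h' h. ring. Qed.

Lemma bresar (b : (P -> P -> R) -> (P -> P -> R) -> (P -> P -> R))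
  (Hb : is_biderivation b) A B U V x y :
  incidence A -> incidence B -> incidence U -> incidence V ->
  imul (icomm A B) (b U V) x y = imul (b A B) (icomm U V) x y.
Proof.
move=> hA hB hU hV.
have iBV := incidence_imul B V; have iAU := incidence_imul A U.
have [_ _ _ r4 _] := Hb A U (imul B V) hA hU iBV.
have [_ _ _ _ r5] := Hb U B V hU hB hV.
have [_ _ _ _ r5'] := Hb A B V hA hB hV.
have [_ _ _ _ r5''] := Hb (imul A U) B V iAU hB hV.
have [_ _ _ r4' _] := Hb A U V hA hU hV.
have [_ _ _ r4'' _] := Hb A U B hA hU hB.
have e1 : b (imul A U) (imul B V) x y =
  imul A (imul B (b U V)) x y + imul A (imul (b U B) V) x y +
  (imul (imul B (b A V)) U x y + imul (imul (b A B) V) U x y).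
  by rewrite r4 r5 r5' iaddE !imul_addr !imul_addl.
have e2 : b (imul A U) (imul B V) x y =
  imul B (imul A (b U V)) x y + imul B (imul (b A V) U) x y +
  (imul (imul A (b U B)) V x y + imul (imul (b A B) U) V x y).
  by rewrite r5'' r4' r4'' iaddE !imul_addr !imul_addl.
rewrite /icomm imul_subl imul_subr.
rewrite -(imulA A B (b U V) x y) in e1.
rewrite -(imulA B A (b U V) x y) in e2.
rewrite (imulA A (b U B) V x y) (imulA (b A B) U V x y) in e2.
rewrite (imulA B (b A V) U x y) (imulA (b A B) V U x y) in e1.
rewrite e1 in e2.
exact: zmod_aux e2.
Qed.



Lemma icommE (u v : P) : (u < v)%O -> icomm (E u u) (E u v) = E u v.
Proof.
move=> uv; have uv' := ltW uv.
apply: functional_extensionality => x; apply: functional_extensionality => y.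
rewrite /icomm /isub imulEl ?imulEr //; try exact: incidenceE.
rewrite /E eqxx /= (lt_eqF uv) andbF if_same subr0.
by case: (x == u).
Qed.

Lemma imul_diag (A B : P -> P -> R) p : imul A B p p = A p p * B p p.
Proof.
rewrite /imul (sum_itv1 (c := p)) ?lexx //.
move=> z; rewrite mem_itv => zin zp; move: zp; rewrite eq_le.
by rewrite andbC in zin; rewrite zin.
Qed.

Lemma icomm_diag (A B : P -> P -> R) p : icomm A B p p = 0.
Proof. by rewrite /icomm /isub !imul_diag mulrC subrr. Qed.

Section Main.
Context (b : (P -> P -> R) -> (P -> P -> R) -> (P -> P -> R)) (Hb : is_biderivation b).
Context (HF : forall a c : P, (a < c)%O -> (exists w, (w < a)%O) \/ (exists w, (c < w)%O)).
Context (HNI : forall p : P, exists w, w != p /\ ((w <= p) || (p <= w))%O).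

Definition M (u v : P) := b (E u u) (E u v).
Definition lam (u v : P) := M u v u v.

Lemma incb A B : incidence A -> incidence B -> incidence (b A B).
Proof. by move=> hA hB; case: (Hb hA hB hA). Qed.

Lemma BA A B u v x y : incidence A -> incidence B -> (u < v)%O ->
  (if y == v then b A B x u else 0) = imul (icomm A B) (M u v) x y.
Proof.
move=> hA hB uv; have uv' := ltW uv.
rewrite (bresar Hb) ?icommE ?imulEr //; try exact: incidenceE.
exact: incb.
Qed.

Lemma BB A B u v x y : incidence A -> incidence B -> (u < v)%O ->
  (if x == u then b A B v y else 0) = imul (M u v) (icomm A B) x y.
Proof.
move=> hA hB uv; have uv' := ltW uv.
rewrite -(bresar Hb) ?icommE ?imulEl //; try exact: incidenceE.
exact: incb.
Qed.

Lemma V1 s t u v y : (s < t)%O -> (u < v)%O -> y != v -> M u v t y = 0.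
Proof.
move=> st uv yv; have := BA s y (incidenceE (lexx s)) (incidenceE (ltW st)) uv.
rewrite (negbTE yv) icommE // imulEl ?eqxx //; try exact: ltW; try (by apply: incb; apply: incidenceE; rewrite // ltW).
Qed.

Lemma V2 s t u v x : (s < t)%O -> (u < v)%O -> x != u -> M u v x s = 0.
Proof.
move=> st uv xu; have := BB x t (incidenceE (lexx s)) (incidenceE (ltW st)) uv.
rewrite (negbTE xu) icommE // imulEr ?eqxx //; try exact: ltW; try (by apply: incb; apply: incidenceE; rewrite // ltW).
Qed.

Lemma R1 s t v : (s < t)%O -> (t < v)%O -> lam s t = lam t v.
Proof.
move=> st tv; have := BA s v (incidenceE (lexx s)) (incidenceE (ltW st)) tv.
rewrite eqxx icommE // imulEl ?eqxx //; try exact: ltW; try (by apply: incb; apply: incidenceE; rewrite // ltW).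
Qed.

Lemma MainA A B p q v w : incidence A -> incidence B -> (p <= q)%O -> (q < v)%O -> (v < w)%O ->
  b A B p q = icomm A B p q * lam q v.
Proof.
move=> hA hB pq qv vw; have := BA p v hA hB qv; rewrite eqxx => ->.
rewrite /imul (sum_itv1 (c := q)) ?pq ?(ltW qv) //.
by move=> z _ zq; rewrite (V2 vw qv zq) mulr0.
Qed.

Lemma MainB A B p q u w : incidence A -> incidence B -> (w < u)%O -> (u < p)%O -> (p <= q)%O ->
  b A B p q = lam u p * icomm A B p q.
Proof.
move=> hA hB wu up pq; have := BB u q hA hB up; rewrite eqxx => ->.
rewrite /imul (sum_itv1 (c := p)) ?pq ?(ltW up) //.
by move=> z _ zp; rewrite (V1 wu up zp) mul0r.
Qed.

Definition goodUp (q : P) := exists v w, (q < v)%O /\ (v < w)%O.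
Definition goodDown (p : P) := exists u w, (w < u)%O /\ (u < p)%O.

Lemma good p q : (p <= q)%O -> (exists u, (u < p)%O) \/ (exists v, (q < v)%O) ->
  goodUp q \/ goodDown p.
Proof.
move=> pq [[u up]|[v qv]].
  case: (classic (exists w, (w < u)%O)) => [[w wu]|nu]; first by right; exists u, w.
  have uq := lt_le_trans up pq.
  case: (HF uq) => [//|[v qv]].
  case: (classic (exists w, (v < w)%O)) => [[w vw]|nv]; first by left; exists v, w.
  by case: (HF (lt_trans uq qv)).
case: (classic (exists w, (v < w)%O)) => [[w vw]|nv]; first by left; exists v, w.
have pv := le_lt_trans pq qv.
case: (HF pv) => [[u up]|//].
case: (classic (exists w, (w < u)%O)) => [[w wu]|nu]; first by right; exists u, w.
by case: (HF (lt_trans up pv)).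
Qed.

Lemma MainOff A B p q : incidence A -> incidence B -> (p < q)%O ->
  b A B p q = lam p q * icomm A B p q.
Proof.
move=> hA hB pq.
case: (good (ltW pq) (HF pq)) => [[v [w [qv vw]]]|[u [w [wu up]]]].
  by rewrite (MainA hA hB (ltW pq) qv vw) (R1 pq qv) mulrC.
by rewrite (MainB hA hB wu up (ltW pq)) (R1 up pq).
Qed.

Lemma MainDiag A B p : incidence A -> incidence B -> b A B p p = 0.
Proof.
move=> hA hB; have [w [wp c]] := HNI p.
have H : (exists u, (u < p)%O) \/ (exists v, (p < v)%O).
  by case/orP: c => c; [left|right]; exists w; rewrite lt_neqAle ?wp // eq_sym wp.
case: (good (lexx p) H) => [[v [w' [qv vw]]]|[u [w' [wu up]]]].
  by rewrite (MainA hA hB (lexx p) qv vw) icomm_diag mul0r.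
by rewrite (MainB hA hB wu up (lexx p)) icomm_diag mulr0.
Qed.

End Main.
End Alg.

End Part1.

Section Part2.
Local Open Scope order_scope.

Section Gen.
Context {d : Order.disp_t} {T : porderType d}.
Context (Hlf : @locally_finite d T).

Lemma pigeon (f : nat -> T) (s : seq T) :
  (forall n, f n < f n.+1) -> (forall n, f n \in s) -> False.
Proof.
move=> Hf Hs.
have mono : forall n m, (n < m)%N -> f n < f m.
  move=> n; elim=> [//|m IH]; rewrite ltnS leq_eqVlt => /orP[/eqP ->//|nm].
  exact: lt_trans (IH nm) (Hf m).
have inj : injective f.
  move=> n m e; case: (ltngtP n m) => // nm; have := mono _ _ nm; by rewrite e ltxx.
have U : uniq (map f (iota 0 (size s).+1)) by rewrite map_inj_uniq ?iota_uniq.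
have Hsub : {subset map f (iota 0 (size s).+1) <= s}.
  by move=> z /mapP[n _ ->].
by have := uniq_leq_size U Hsub; rewrite size_map size_iota ltnn.
Qed.

Lemma itv_size_lt (a w' w : T) : a <= w' -> w' < w -> (size (itv a w') < size (itv a w))%N.
Proof.
move=> aw' w'w.
have U : uniq (w :: itv a w').
  rewrite /= itv_uniq // andbT mem_itv //; apply/negP => /andP[_ ww'].
  by have := lt_le_trans w'w ww'; rewrite ltxx.
have := uniq_leq_size U; apply => z; rewrite in_cons mem_itv // mem_itv //.
case/orP => [/eqP ->|/andP[az zw']]; first by rewrite (le_trans aw' (ltW w'w)) lexx.
by rewrite az (le_trans zw' (ltW w'w)).
Qed.

Definition is_cover (a w c : T) := a < c /\ c <= w /\ forall z, a < z -> ~~ (z < c).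

Lemma cover_exists (a w : T) : a < w -> exists c, is_cover a w c.
Proof.
move: {2}(size (itv a w)) (leqnn (size (itv a w))) => n.
elim: n w => [|n IH] w Hs aw.
  have : w \in itv a w by rewrite mem_itv // (ltW aw) lexx.
  by move: Hs; rewrite leqn0 size_eq0 => /eqP ->.
case: (classic (exists z, a < z /\ z < w)) => [[z [az zw]]|nz].
  have Hz : (size (itv a z) <= n)%N.
    by rewrite -ltnS; apply: leq_trans Hs; apply: itv_size_lt => //; exact: ltW.
  have [c [ac [cz cov]]] := IH z Hz az.
  by exists c; split=> //; split=> //; exact: le_trans cz (ltW zw).
exists w; split=> //; split=> // z az; apply/negP => zw; apply: nz; by exists z.
Qed.

Definition cov (a w : T) : T := epsilon (inhabits a) (is_cover a w).

Lemma covP (a w : T) : a < w -> is_cover a w (cov a w).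
Proof. by move=> aw; apply: epsilon_spec; exact: cover_exists. Qed.

Fixpoint pth (a c : T) (n : nat) : T :=
  match n with
  | 0 => a
  | n'.+1 => let x := pth a c n' in if x < c then cov x c else x
  end.

Lemma pth_step a c n : pth a c n <= pth a c n.+1.
Proof. by rewrite /=; case: ifP => // xc; case: (covP xc) => /ltW. Qed.

Lemma pth_mono a c n m : (n <= m)%N -> pth a c n <= pth a c m.
Proof.
elim: m => [|m IH]; first by rewrite leqn0 => /eqP ->.
rewrite leq_eqVlt => /orP[/eqP ->//|]; rewrite ltnS => nm.
exact: le_trans (IH nm) (pth_step _ _ _).
Qed.

Lemma pth_bound a c n : a <= c -> a <= pth a c n <= c.
Proof.
move=> ac; elim: n => [|n IH]; first by rewrite lexx ac.
rewrite /=; case: ifP => // xc; case: (covP xc) => [l [u _]].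
by rewrite u andbT; case/andP: IH => ha _; apply: le_trans ha (ltW l).
Qed.

Lemma pth_max a c w : a <= w -> w <= c ->
  (forall n, (w <= pth a c n) || (pth a c n <= w)) -> exists n, w = pth a c n.
Proof.
move=> aw wc Hc; apply: NNPP => nex.
have lt : forall n, pth a c n < w.
  elim=> [|n IH]; first by rewrite lt_neqAle aw andbT; apply/eqP => e; apply: nex; exists 0.
  have xc : pth a c n < c := lt_le_trans IH wc.
  have [l [u cv]] := covP xc.
  have e : pth a c n.+1 = cov (pth a c n) c by rewrite /= xc.
  case/orP: (Hc n.+1) => h.
    have wne : w != pth a c n.+1 by apply/eqP => e'; apply: nex; exists n.+1.
    have : w < cov (pth a c n) c by rewrite -e lt_neqAle wne h.
    by move/negP: (cv w IH).
  rewrite lt_neqAle h andbT; apply/eqP => e'; apply: nex; exists n.+1; by rewrite e'.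
apply: (@pigeon (pth a c) (itv a w)).
  move=> n; have xc : pth a c n < c := lt_le_trans (lt n) wc.
  by rewrite /= xc; case: (covP xc).
move=> n; rewrite mem_itv //; have /andP[h1 _] := pth_bound n (le_trans aw wc).
by rewrite h1 /= ltW.
Qed.

Definition upnext (x : T) : T :=
  if excluded_middle_informative (exists w, x < w)
  then cov x (epsilon (inhabits x) (fun w => x < w)) else x.

Fixpoint up (q : T) (n : nat) : T :=
  match n with 0 => q | n'.+1 => upnext (up q n') end.

Lemma upnextP x : (exists w, x < w) ->
  x < upnext x /\ forall z, x < z -> ~~ (z < upnext x).
Proof.
move=> ex; rewrite /upnext; destruct (excluded_middle_informative (exists w, x < w)) as [e|nn]; last by [].
rewrite /=.
have xw : x < epsilon (inhabits x) (fun w => x < w) by apply: (@epsilon_spec _ (inhabits x) (fun w => x < w)).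
by have [l [_ c]] := covP xw; split.
Qed.

Lemma up_step q n : up q n <= up q n.+1.
Proof.
rewrite /=; case: (classic (exists w, up q n < w)) => ex.
  by case: (upnextP ex) => /ltW.
by rewrite /upnext; destruct (excluded_middle_informative (exists w, up q n < w)).
Qed.

Lemma up_mono q n m : (n <= m)%N -> up q n <= up q m.
Proof.
elim: m => [|m IH]; first by rewrite leqn0 => /eqP ->.
rewrite leq_eqVlt => /orP[/eqP ->//|]; rewrite ltnS => nm.
exact: le_trans (IH nm) (up_step _ _).
Qed.

Lemma up_ge q n : q <= up q n.
Proof. by apply: (@up_mono q 0 n). Qed.

Lemma up_max q w : q < w ->
  (forall n, (w <= up q n) || (up q n <= w)) -> exists n, w = up q n.
Proof.
move=> qw Hc; apply: NNPP => nex.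
have lt : forall n, up q n < w.
  elim=> [|n IH] //.
  have [l cv] := upnextP (ex_intro _ w IH).
  case/orP: (Hc n.+1) => h.
    have wne : w != up q n.+1 by apply/eqP => e'; apply: nex; exists n.+1.
    have : w < upnext (up q n) by rewrite lt_neqAle wne h.
    by move/negP: (cv w IH).
  rewrite lt_neqAle h andbT; apply/eqP => e'; apply: nex; exists n.+1; by rewrite e'.
apply: (@pigeon (up q) (itv q w)).
  by move=> n; case: (upnextP (ex_intro _ w (lt n))).
by move=> n; rewrite mem_itv // up_ge ltW.
Qed.

End Gen.

End Part2.

Section Part3.
Local Open Scope order_scope.

Section Chains.
Context {d : Order.disp_t} {P : porderType d}.
Context (Hlf : @locally_finite d P).
Context (Hinf : forall l : P -> Prop, maximal_chain l -> ~ finite_set l).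

Lemma HF (a c : P) : a < c -> (exists w, w < a) \/ (exists w, c < w).
Proof.
move=> ac; apply: NNPP => H.
have na : forall w, ~~ (w < a) by move=> w; apply/negP => wa; apply: H; left; exists w.
have nc : forall w, ~~ (c < w) by move=> w; apply/negP => cw; apply: H; right; exists w.
pose l := fun x => exists n, x = pth a c n.
have ac' := ltW ac.
have cin : l c.
  by apply: (pth_max Hlf ac' (lexx c)) => n; case/andP: (pth_bound Hlf n ac') => _ ->; rewrite orbT.
apply: (Hinf (l := l)).
  split; first by [].
  have chl : is_chain l.
    rewrite /is_chain => x y [n ->] [m ->]; case: (leqP n m) => nm.
      by rewrite (pth_mono Hlf).
    by rewrite (pth_mono Hlf _ _ (ltnW nm)) orbT.
  split=> // l' sub _ chl' w lw.
  have la : l a by exists 0.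
  have aw : a <= w.
    case/orP: (chl' _ _ (sub _ la) lw) => // wa.
    by move: wa; rewrite le_eqVlt (negbTE (na w)) orbF => /eqP ->.
  have wc : w <= c.
    case/orP: (chl' _ _ lw (sub _ cin)) => // cw.
    by move: cw; rewrite le_eqVlt (negbTE (nc w)) orbF => /eqP ->.
  apply: (pth_max Hlf aw wc) => n; apply: chl' => //; apply: sub; by exists n.
exists (itv a c) => z [n ->]; rewrite (mem_itv Hlf); exact: (pth_bound Hlf n ac').
Qed.

Lemma HNI (p : P) : exists w, w != p /\ ((w <= p) || (p <= w)).
Proof.
apply: NNPP => H.
apply: (Hinf (l := fun x => x = p)); last by exists [:: p] => z ->; rewrite inE.
split; first by [].
split; first by move=> x y -> ->; rewrite lexx.
move=> l' sub _ chl' w lw; apply: NNPP => wp; apply: H; exists w; split.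
  by apply/eqP.
exact: chl' _ _ lw (sub _ erefl).
Qed.

Lemma lf_dual : @locally_finite _ (P^d).
Proof.
move=> x y; have [s Hs] := Hlf y x; exists s => z.
by rewrite !leEdual andbC; exact: Hs.
Qed.

Definition DownMax (L : P -> Prop) p := (forall a, L a -> a < p) /\ is_chain L /\
  (forall w, w < p -> (forall a, L a -> comparable_rel w a) -> L w).
Definition UpMax (U : P -> Prop) q := (forall a, U a -> q < a) /\ is_chain U /\
  (forall w, q < w -> (forall a, U a -> comparable_rel w a) -> U w).
Definition SMax (S : P -> Prop) p q := (forall a, S a -> p <= a <= q) /\ is_chain S /\
  S p /\ S q /\ (forall w, p <= w <= q -> (forall a, S a -> comparable_rel w a) -> S w).
Definition Pmax (m : P -> Prop) := is_chain m /\
  forall w, (forall a, m a -> comparable_rel w a) -> m w.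

Lemma cmpC (x y : P) : comparable_rel x y -> comparable_rel y x.
Proof. by rewrite /comparable_rel orbC. Qed.

Lemma MaxBuild (L S U : P -> Prop) (p q : P) : p <= q -> DownMax L p -> SMax S p q -> UpMax U q ->
  Pmax (fun a => L a \/ S a \/ U a).
Proof.
move=> pq [Lb [Lc Lm]] [Sb [Sc [Sp [Sq Sm]]]] [Ub [Uc Um]].
split.
  have LS : forall a b, L a -> S b -> comparable_rel a b.
    move=> a b /Lb ap /Sb /andP[pb _]; by rewrite /comparable_rel (le_trans (ltW ap) pb).
  have LU : forall a b, L a -> U b -> comparable_rel a b.
    move=> a b /Lb ap /Ub qb; by rewrite /comparable_rel (le_trans (ltW ap) (le_trans pq (ltW qb))).
  have SU : forall a b, S a -> U b -> comparable_rel a b.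
    move=> a b /Sb /andP[_ aq] /Ub qb; by rewrite /comparable_rel (le_trans aq (ltW qb)).
  move=> a b [ha|[ha|ha]] [hb|[hb|hb]]; try by [apply: Lc|apply: Sc|apply: Uc].
  - exact: LS. - exact: LU. - exact: cmpC (LS _ _ hb ha). - exact: SU.
  - exact: cmpC (LU _ _ hb ha). - exact: cmpC (SU _ _ hb ha).
move=> w Hw.
have wp : comparable_rel w p by apply: Hw; right; left.
have wq : comparable_rel w q by apply: Hw; right; left.
case/orP: wp => [wp|pw].
  case: (boolP (w == p)) => [/eqP ->|nwp]; first by right; left.
  left; apply: Lm; first by rewrite lt_neqAle nwp.
  by move=> a La; apply: Hw; left.
case/orP: wq => [wq|qw].
  by right; left; apply: Sm; [rewrite pw wq | move=> a Sa; apply: Hw; right; left].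
case: (boolP (w == q)) => [/eqP ->|nwq]; first by right; left.
right; right; apply: Um; first by rewrite lt_neqAle eq_sym nwq.
by move=> a Ua; apply: Hw; right; right.
Qed.

Lemma rt_sym (T : Type) (r : T -> T -> Prop) : (forall x y, r x y -> r y x) ->
  forall x y, Relation_Operators.clos_refl_trans T r x y ->
              Relation_Operators.clos_refl_trans T r y x.
Proof.
move=> sym x y; elim=> [a b /sym h|a|a b c _ h1 _ h2].
- exact: Relation_Operators.rt_step.
- exact: Relation_Operators.rt_refl.
- exact: Relation_Operators.rt_trans h2 h1.
Qed.

Lemma Pmax_in (m : P -> Prop) (p : P) : Pmax m -> m p -> maximal_chain_in (connectedP p) m.
Proof.
move=> [mc mm] mp; split.
  by move=> a ma; apply: Relation_Operators.rt_step; apply: mc.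
split=> // l' sub _ chl' w lw; apply: mm => a ma; exact: chl' _ _ lw (sub _ ma).
Qed.

Lemma comp_closed (Q : P -> Prop) (x w : P) : is_component Q -> Q x -> comparable_rel x w -> Q w.
Proof.
move=> [x0 ->] Qx xw; apply: Relation_Operators.rt_trans Qx _.
exact: Relation_Operators.rt_step.
Qed.

Lemma comp_eq (Q : P -> Prop) (x : P) : is_component Q -> Q x -> Q = connectedP x.
Proof.
move=> [x0 ->] Qx; apply: functional_extensionality => w.
apply: propositional_extensionality; split => h.
  apply: Relation_Operators.rt_trans h.
  by apply: rt_sym Qx => a b; exact: cmpC.
exact: Relation_Operators.rt_trans Qx h.
Qed.

Lemma DownMax_of (Q l : P -> Prop) (x : P) : maximal_chain_in Q l -> l x -> (forall w, comparable_rel x w -> Q w) ->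
  DownMax (fun a => l a /\ a < x) x.
Proof.
move=> [lQ [lc lm]] lx Qc; split; first by move=> a [].
split; first by move=> a b [la _] [lb _]; exact: lc.
move=> w wx Hw.
have wall : forall a, l a -> comparable_rel w a.
  move=> a la; case/orP: (lc _ _ la lx) => ax.
    case: (boolP (a == x)) => [/eqP ->|nax]; first by rewrite /comparable_rel (ltW wx).
    by apply: Hw; split=> //; rewrite lt_neqAle nax.
  by rewrite /comparable_rel (le_trans (ltW wx) ax).
split=> //; apply: (lm (fun a => l a \/ a = w)); first by move=> a; left.
- move=> a [la|->]; [exact: lQ|apply: Qc; rewrite /comparable_rel (ltW wx) orbT //].
- move=> a b [la|->] [lb|->]; [exact: lc|exact: cmpC (wall _ la)|exact: wall|by rewrite lexx].
- by right.
Qed.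

Lemma UpMax_of (Q l : P -> Prop) (y : P) : maximal_chain_in Q l -> l y -> (forall w, comparable_rel y w -> Q w) ->
  UpMax (fun a => l a /\ y < a) y.
Proof.
move=> [lQ [lc lm]] ly Qc; split; first by move=> a [].
split; first by move=> a b [la _] [lb _]; exact: lc.
move=> w yw Hw.
have wall : forall a, l a -> comparable_rel w a.
  move=> a la; case/orP: (lc _ _ la ly) => ay.
    by rewrite /comparable_rel (le_trans ay (ltW yw)) orbT.
  case: (boolP (a == y)) => [/eqP ->|nay]; first by rewrite /comparable_rel (ltW yw) orbT.
  by apply: Hw; split=> //; rewrite lt_neqAle eq_sym nay.
split=> //; apply: (lm (fun a => l a \/ a = w)); first by move=> a; left.
- move=> a [la|->]; [exact: lQ|apply: Qc; rewrite /comparable_rel (ltW yw) //].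
- move=> a b [la|->] [lb|->]; [exact: lc|exact: cmpC (wall _ la)|exact: wall|by rewrite lexx].
- by right.
Qed.

Lemma Down_empty (L : P -> Prop) (p : P) : DownMax L p -> (forall a, ~ L a) -> forall w, ~ (w < p).
Proof. by move=> [_ [_ Lm]] H w wp; apply: (H w); apply: (Lm w wp) => a /H. Qed.

Lemma Up_empty (U : P -> Prop) (q : P) : UpMax U q -> (forall a, ~ U a) -> forall w, ~ (q < w).
Proof. by move=> [_ [_ Um]] H w qw; apply: (H w); apply: (Um w qw) => a /H. Qed.

Lemma SMax_ex (p z q : P) : p <= z -> z <= q ->
  SMax (fun a => (exists n, a = pth p z n) \/ (exists n, a = pth z q n)) p q.
Proof.
move=> pz zq.
have b1 : forall n, p <= pth p z n <= z by move=> n; exact: (pth_bound Hlf n pz).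
have b2 : forall n, z <= pth z q n <= q by move=> n; exact: (pth_bound Hlf n zq).
have Sz2 : exists n, z = pth z q n by exists 0.
split.
  move=> a [[n ->]|[n ->]].
    by case/andP: (b1 n) => -> h; rewrite (le_trans h zq).
  by case/andP: (b2 n) => h ->; rewrite (le_trans pz h).
split.
  have mono : forall (a c : P) n m, comparable_rel (pth a c n) (pth a c m).
    move=> a c n m; case: (leqP n m) => nm; first by rewrite /comparable_rel (pth_mono Hlf).
    by rewrite /comparable_rel (pth_mono Hlf _ _ (ltnW nm)) orbT.
  move=> a b [[n ->]|[n ->]] [[m ->]|[m ->]]; try exact: mono.
    case/andP: (b1 n) => _ h1; case/andP: (b2 m) => h2 _.
    by rewrite /comparable_rel (le_trans h1 h2).
  case/andP: (b1 m) => _ h1; case/andP: (b2 n) => h2 _.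
  by rewrite /comparable_rel (le_trans h1 h2) orbT.
split; first by left; exists 0.
split.
  right; apply: (pth_max Hlf zq (lexx q)) => n.
  by case/andP: (b2 n) => _ ->; rewrite orbT.
move=> w /andP[pw wq] Hw.
case/orP: (Hw z (or_intror Sz2)) => [wz|zw].
  left; apply: (pth_max Hlf pw wz) => n; apply: Hw; left; by exists n.
right; apply: (pth_max Hlf zw wq) => n; apply: Hw; right; by exists n.
Qed.

End Chains.

End Part3.

Section Part4.
Local Open Scope order_scope.

Section Exist.
Context {d : Order.disp_t} {P : porderType d}.
Context (Hlf : @locally_finite d P).

Lemma down_ray (p : P) :
  DownMax (fun a => a < p /\ exists n, a = (@up _ (P^d) p n : P)) p.
Proof.
have Hd := lf_dual Hlf.
split; first by move=> a [].
split.
  move=> a b [_ [n ->]] [_ [m ->]]; rewrite /comparable_rel.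
  case: (leqP n m) => nm.
    by have := up_mono Hd p nm; rewrite leEdual => ->; rewrite orbT.
  by have := up_mono Hd p (ltnW nm); rewrite leEdual => ->.
move=> w wp Hw; split=> //.
have pw : (p : P^d) < (w : P^d) by rewrite ltEdual.
suff [n ->] : exists n, (w : P^d) = @up _ (P^d) p n by exists n.
apply: (up_max Hd pw) => n; have := up_ge Hd p n; rewrite !leEdual => h.
case: (boolP ((@up _ (P^d) p n : P) == p)) => [/eqP e|ne].
  by rewrite e (ltW wp) orbT.
have : comparable_rel w (@up _ (P^d) p n : P).
  apply: Hw; split; last by exists n.
  by rewrite lt_neqAle ne h.
by rewrite /comparable_rel orbC.
Qed.

Lemma up_ray (q : P) :
  UpMax (fun a => q < a /\ exists n, a = up q n) q.
Proof.
split; first by move=> a [].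
split.
  move=> a b [_ [n ->]] [_ [m ->]]; rewrite /comparable_rel.
  case: (leqP n m) => nm.
    by rewrite (up_mono Hlf q nm).
  by rewrite (up_mono Hlf q (ltnW nm)) orbT.
move=> w qw Hw; split=> //.
suff [n ->] : exists n, w = up q n by exists n.
apply: (up_max Hlf qw) => n; have h := up_ge Hlf q n.
case: (boolP (up q n == q)) => [/eqP e|ne].
  by rewrite e (ltW qw) orbT.
apply: Hw; split; last by exists n.
by rewrite lt_neqAle eq_sym ne h.
Qed.

Lemma exist_chain (p q : P) : p <= q -> exists m, Pmax m /\ m p /\ m q.
Proof.
move=> pq.
have S := SMax_ex Hlf (lexx p) pq.
have Hm := MaxBuild pq (down_ray p) S (up_ray q).
eexists; split; first exact: Hm.
case: S => [_ [_ [Sp [Sq _]]]].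
by split; right; left.
Qed.

End Exist.

End Part4.

Section Part5.
Local Open Scope order_scope.

Section Final.
Context {d : Order.disp_t} {P : porderType d} {R : comPzRingType}.
Context (Hlf : @locally_finite d P).
Context (Hinf : forall l : P -> Prop, maximal_chain l -> ~ finite_set l).
Context (b : (P -> P -> R) -> (P -> P -> R) -> (P -> P -> R)) (Hb : is_biderivation b).

Local Notation lm := (lam b).

Lemma L2a (a m c : P) : a < m -> m < c -> lm a c = lm m c.
Proof.
move=> am mc; have ac := lt_trans am mc.
case: (classic (exists w, c < w)) => [[w cw]|nc].
  by rewrite (R1 Hlf Hb ac cw) (R1 Hlf Hb mc cw).
case: (HF Hlf Hinf ac) => [[u ua]|[w cw]]; last by case: nc; exists w.
by rewrite -(R1 Hlf Hb ua ac) (R1 Hlf Hb ua am) (R1 Hlf Hb am mc).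
Qed.

Lemma L2b (a m c : P) : a < m -> m < c -> lm a m = lm a c.
Proof. by move=> am mc; rewrite (R1 Hlf Hb am mc) (L2a am mc). Qed.

Lemma Lhelp (a e m M : P) : a < e -> m <= a -> e <= M -> lm a e = lm m M.
Proof.
move=> ae ma eM.
have -> : lm a e = lm m e.
  case: (boolP (m == a)) => [/eqP ->//|nma].
  by rewrite (L2a (m := a) (c := e)) // lt_neqAle nma ma.
case: (boolP (e == M)) => [/eqP ->//|neM].
by rewrite (L2b (m := e) (c := M)) ?(le_lt_trans ma ae) // lt_neqAle neM eM.
Qed.

Lemma L3 (a e c f : P) : a < e -> c < f -> comparable_rel a c -> comparable_rel e f ->
  lm a e = lm c f.
Proof.
move=> ae cf /orP[ac|ca] /orP[ef|fe].
- by rewrite (Lhelp ae (lexx a) ef) (Lhelp cf ac (lexx f)).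
- by rewrite (Lhelp cf ac fe).
- by rewrite (Lhelp ae ca ef).
- by rewrite (Lhelp ae ca (lexx e)) (Lhelp cf (lexx c) fe).
Qed.

Definition Const (l : P -> Prop) (K : R) := forall x y, l x -> l y -> x < y -> lm x y = K.

Lemma const_step (Q l1 l2 : P -> Prop) K :
  maximal_chain_in Q l1 -> maximal_chain_in Q l2 -> chain_approx l1 l2 ->
  Const l1 K -> Const l2 K.
Proof.
move=> [_ [c1 _]] [_ [c2 _]] [x [y [xy [l1x [l1y [l2x l2y]]]]]] C1 a e la le ae.
rewrite -(C1 x y) //; apply: L3 => //; [exact: c2|exact: c2].
Qed.

Lemma approx_sym (l1 l2 : P -> Prop) : chain_approx l1 l2 -> chain_approx l2 l1.
Proof. by move=> [x [y [xy [a [b' [c e]]]]]]; exists x, y. Qed.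

Lemma conn_sym (Q l1 l2 : P -> Prop) : chain_connected Q l1 l2 -> chain_connected Q l2 l1.
Proof.
apply: rt_sym => a c [h1 [h2 h3]]; split=> //; split=> //; exact: approx_sym.
Qed.

Lemma const_rt (Q l1 l2 : P -> Prop) K : chain_connected Q l1 l2 -> Const l1 K -> Const l2 K.
Proof.
elim=> [a c [h1 [h2 h3]]|a|a c e _ IH1 _ IH2] //.
- exact: const_step h1 h2 h3.
- by move=> h; apply: IH2; apply: IH1.
Qed.

Lemma const_chain (l : P -> Prop) x y : is_chain l -> l x -> l y -> x < y -> Const l (lm x y).
Proof.
move=> c lx ly xy a e la le ae; apply: L3 => //; exact: c.
Qed.

Definition lamQC (x0 : P) (C : (P -> Prop) -> Prop) : R :=
  let pr := epsilon (inhabits (x0, x0))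
    (fun pr : P * P => exists l, C l /\ l pr.1 /\ l pr.2 /\ pr.1 < pr.2) in
  lm pr.1 pr.2.

Lemma class_const x0 (Q : P -> Prop) C l x y : is_chain_class Q C -> C l -> l x -> l y -> x < y ->
  lm x y = lamQC x0 C.
Proof.
move=> [l0 [_ ->]] [ml c0l] lx ly xy.
rewrite /lamQC.
set pr := epsilon _ _.
have : exists l, (fun l' => maximal_chain_in Q l' /\ chain_connected Q l0 l') l /\
   l pr.1 /\ l pr.2 /\ pr.1 < pr.2.
  apply: (@epsilon_spec _ (inhabits (x0, x0)) (fun pr : P * P => exists l,
     (fun l' => maximal_chain_in Q l' /\ chain_connected Q l0 l') l /\
     l pr.1 /\ l pr.2 /\ pr.1 < pr.2)).
  by exists (x, y), l.
move=> [l1 [[ml1 c01] [l1a [l1b ab]]]].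
have K1 := const_chain (proj1 (proj2 ml1)) l1a l1b ab.
have K0 := const_rt (conn_sym c01) K1.
have K := const_rt c0l K0.
exact: K.
Qed.

End Final.

End Part5.

Section Part6.
Local Open Scope order_scope.

Section Classes.
Context {d : Order.disp_t} {P : porderType d}.
Context (Hlf : @locally_finite d P).
Context (Hinf : forall l : P -> Prop, maximal_chain l -> ~ finite_set l).

Definition clsOf (m : P -> Prop) (x : P) : (P -> Prop) -> Prop :=
  fun l' => maximal_chain_in (connectedP x) l' /\ chain_connected (connectedP x) m l'.

Lemma cmp_conn (x w : P) : comparable_rel x w -> connectedP x w.
Proof. exact: Relation_Operators.rt_step. Qed.

Lemma conn_closed (x y w : P) : connectedP x y -> comparable_rel y w -> connectedP x w.
Proof. by move=> h c; apply: Relation_Operators.rt_trans h (cmp_conn c). Qed.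

Lemma inC (m m' : P -> Prop) x y : Pmax m -> Pmax m' -> m x -> m y -> m' x -> m' y -> x < y ->
  clsOf m x m'.
Proof.
move=> Pm Pm' mx my m'x m'y xy.
have h1 := Pmax_in Pm mx; have h2 := Pmax_in Pm' m'x.
split=> //; apply: Relation_Operators.rt_step; split=> //; split=> //.
by exists x, y.
Qed.

Lemma support_itv (m : P -> Prop) x y z : Pmax m -> m x -> m y -> x < y -> x <= z <= y ->
  class_support (clsOf m x) z.
Proof.
move=> Pm mx my xy /andP[xz zy].
have mQ := Pmax_in Pm mx.
have Qy : connectedP x y by case: mQ => h _; apply: h.
have DM := DownMax_of mQ mx (fun w => @cmp_conn x w).
have UM := UpMax_of mQ my (fun w c => conn_closed Qy c).
have S := SMax_ex Hlf xz zy.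
have Pm' := MaxBuild (ltW xy) DM S UM.
case: (S) => [_ [_ [Sx [Sy _]]]].
exists (fun a => ((m a /\ a < x) \/ ((exists n, a = pth x z n) \/ (exists n, a = pth z y n)) \/ (m a /\ y < a))).
split; last by right; left; right; exists 0.
apply: inC Pm Pm' mx my _ _ xy; by right; left.
Qed.

Lemma uniq_class (m : P -> Prop) x y (Q' : P -> Prop) C' :
  Pmax m -> m x -> m y -> x < y ->
  is_component Q' -> is_chain_class Q' C' -> class_support C' x -> class_support C' y ->
  Q' = connectedP x /\ C' = clsOf m x.
Proof.
move=> Pm mx my xy cQ [l0 [ml0 ->]] [l1 [[ml1 c1] l1x]] [l2 [[ml2 c2] l2y]].
have Q'x : Q' x by case: ml1 => h _; apply: h.
have eQ := comp_eq cQ Q'x; subst Q'.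
split=> //.
have Qy : connectedP x y by case: ml2 => h _; apply: h.
have DM := DownMax_of ml1 l1x (fun w => @cmp_conn x w).
have UM := UpMax_of ml2 l2y (fun w c => conn_closed Qy c).
have S := SMax_ex Hlf (lexx x) (ltW xy).
have Pm' := MaxBuild (ltW xy) DM S UM.
case: (S) => [_ [_ [Sx [Sy _]]]].
set m' := (fun a => _ \/ _ \/ _) in Pm'.
have m'x : m' x by right; left.
have m'y : m' y by right; left.
have mm' : maximal_chain_in (connectedP x) m' := Pmax_in Pm' m'x.
have cm' : chain_connected (connectedP x) l0 m'.
  case: (classic (exists a, l1 a /\ a < x)) => [[a [l1a ax]]|nL].
    apply: Relation_Operators.rt_trans c1 _; apply: Relation_Operators.rt_step.
    split=> //; split=> //; exists a, x; split=> //; split=> //; split=> //; split=> //.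
    by left.
  case: (classic (exists a, l2 a /\ y < a)) => [[a [l2a ya]]|nU].
    apply: Relation_Operators.rt_trans c2 _; apply: Relation_Operators.rt_step.
    split=> //; split=> //; exists y, a; split=> //; split=> //; split=> //; split=> //.
    by right; right.
  exfalso.
  have h1 := Down_empty DM (fun a h => nL (ex_intro _ a h)).
  have h2 := Up_empty UM (fun a h => nU (ex_intro _ a h)).
  case: (HF Hlf Hinf xy) => [[w wx]|[w yw]]; [exact: h1 wx|exact: h2 yw].
have cmm' : chain_connected (connectedP x) m m' by case: (inC Pm Pm' mx my m'x m'y xy).
apply: functional_extensionality => l; apply: propositional_extensionality.
rewrite /clsOf; split=> -[ml cl]; split=> //.
  apply: Relation_Operators.rt_trans cmm' _.
  apply: Relation_Operators.rt_trans (conn_sym cm') cl.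
apply: Relation_Operators.rt_trans cm' _.
apply: Relation_Operators.rt_trans (conn_sym cmm') cl.
Qed.

End Classes.

End Part6.

Section Part7.

Section Terms.
Context {d : Order.disp_t} {P : porderType d} {R : comPzRingType}.
Context (Hlf : @locally_finite d P).
Local Open Scope ring_scope.

Lemma irestr0 (S : P -> Prop) (f : P -> P -> R) x y : ~ (S x /\ S y) -> irestr S f x y = 0.
Proof. by rewrite /irestr; case: excluded_middle_informative. Qed.

Lemma irestr1 (S : P -> Prop) (f : P -> P -> R) x y : S x -> S y -> irestr S f x y = f x y.
Proof. by move=> sx sy; rewrite /irestr; case: excluded_middle_informative => // [[]]. Qed.

Lemma term_support (S : P -> Prop) (f g : P -> P -> R) x y :
  icomm (irestr S f) (irestr S g) x y != 0 -> S x /\ S y.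
Proof.
move=> hne; apply: NNPP => H; move: hne; apply/negP; rewrite negbK; apply/eqP.
rewrite /icomm /isub /imul.
rewrite !big1 ?subr0 // => z _.
- case: (classic (S x)) => sx.
    by rewrite (@irestr0 S f z y) ?mulr0 // => -[_ sy]; apply: H.
  by rewrite irestr0 ?mul0r // => -[].
- case: (classic (S x)) => sx.
    by rewrite (@irestr0 S g z y) ?mulr0 // => -[_ sy]; apply: H.
  by rewrite irestr0 ?mul0r // => -[].
Qed.

Lemma term_full (S : P -> Prop) (f g : P -> P -> R) x y :
  (forall z, (x <= z <= y)%O -> S z) ->
  icomm (irestr S f) (irestr S g) x y = icomm f g x y.
Proof.
move=> H; rewrite /icomm /isub /imul; congr (_ - _); apply: eq_big_seq => z;
  rewrite (mem_itv Hlf) => /andP[xz zy];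
  have xy := le_trans xz zy;
  by rewrite !irestr1 //; apply: H; rewrite ?lexx ?xz ?zy ?xy.
Qed.

Lemma term_notle (f g : P -> P -> R) x y : ~~ (x <= y)%O -> icomm f g x y = 0.
Proof.
by move=> nxy; rewrite /icomm /isub !(incidence_imul Hlf) ?subr0.
Qed.

End Terms.


End Part7.

Theorem mainTheorem18 (R : comPzRingType) (d : Order.disp_t) (P : porderType d)
  (Hlf : @locally_finite d P)
  (H3 : exists a b c : P, [/\ a != b, b != c & a != c])
  (Hinf : forall l : P -> Prop, maximal_chain l -> ~ finite_set l)
  (b : (P -> P -> R) -> (P -> P -> R) -> (P -> P -> R))
  (Hb : is_biderivation b) :
  exists lam : (P -> Prop) -> ((P -> Prop) -> Prop) -> R,
    forall alpha beta : P -> P -> R, incidence alpha -> incidence beta ->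
    forall x y : P,
    exists s : seq ((P -> Prop) * ((P -> Prop) -> Prop)),
      [/\ List.NoDup s,
          (forall k, List.In k s -> is_component k.1 /\ is_chain_class k.1 k.2),
          (forall Q C, is_component Q -> is_chain_class Q C ->
             (lam Q C * icomm (irestr (class_support C) alpha)
                              (irestr (class_support C) beta) x y != 0)%R ->
             List.In (Q, C) s)
        & b alpha beta x y =
          (\sum_(k <- s) lam k.1 k.2 * icomm (irestr (class_support k.2) alpha)
                                              (irestr (class_support k.2) beta) x y)%R].
Proof.
have [x0 _] : exists x0 : P, True by case: H3 => a _; exists a.
exists (fun Q C => lamQC b x0 C).
move=> alpha beta ha hb x y.
have nz : forall (Q : P -> Prop) C, (lamQC b x0 C * icomm (irestr (class_support C) alpha)
      (irestr (class_support C) beta) x y != 0)%R ->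
      class_support C x /\ class_support C y.
  move=> Q C h; apply: (@term_support _ _ R (class_support C) alpha beta x y); apply: contraNneq h => ->; by rewrite mulr0.
case: (boolP (x <= y)%O) => xy; last first.
  exists [::]; split.
  - exact: List.NoDup_nil.
  - by [].
  - by move=> Q C _ _; rewrite (term_notle Hlf) // mulr0 eqxx.
  - by rewrite big_nil; apply: (incb Hb ha hb).
case: (boolP (x == y)) => [/eqP exy|nxy].
  subst y; exists [::]; split.
  - exact: List.NoDup_nil.
  - by [].
  - by move=> Q C _ _; rewrite (icomm_diag Hlf) mulr0 eqxx.
  - by rewrite big_nil (MainDiag Hlf Hb (HF Hlf Hinf) (HNI Hinf)).
have xly : (x < y)%O by rewrite lt_neqAle nxy xy.
have [m [Pm [mx my]]] := exist_chain Hlf xy.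
exists [:: (connectedP x, clsOf m x)]; split.
- apply: List.NoDup_cons; [by []|exact: List.NoDup_nil].
- move=> k [<-|[]]; split; first by exists x.
  exists m; split; first exact: Pmax_in Pm mx.
  by [].
- move=> Q C cQ cC h; have [sx sy] := nz Q C h.
  have [-> ->] := uniq_class Hlf Hinf Pm mx my xly cQ cC sx sy.
  by left.
- rewrite big_seq1 /= (MainOff Hlf Hb (HF Hlf Hinf) ha hb xly).
  have cC : is_chain_class (connectedP x) (clsOf m x).
    by exists m; split; first exact: Pmax_in Pm mx.
  have Cm : clsOf m x m.
    by split; [exact: Pmax_in Pm mx|exact: Relation_Operators.rt_refl].
  rewrite (class_const Hlf Hinf Hb x0 cC Cm mx my xly).

  congr (_ * _)%R; symmetry; apply: (term_full Hlf) => z hz.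

  have := (support_itv Hlf Pm mx my xly hz). done.
Qed.
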